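(* Let $d:\mathcal{A}\to A$ be any derivation with Fourier components $d_n$. Then for every $a\in\mathcal{A}$ and every finitely supported $x\in c_{00}(\mathbb{Z}_{\ge0})\subseteq\ell^2(\mathbb{Z}_{\ge0})$, the series $\sum_{n\in\mathbb{Z}}d_n(a)x$ converges in $\ell^2(\mathbb{Z}_{\ge0})$ and $\sum_{n\in\mathbb{Z}}d_n(a)x=d(a)x$.
   Context: Setup: $G$ is an infinite compact (Hausdorff) abelian group, written additively, and $x_1\in G$ generates a dense cyclic subgroup; $x_n=nx_1$. $\widehat G$ is the group of continuous characters. Let $H_+=\ell^2(\mathbb{Z}_{\ge 0})$ with canonical basis $\{E_k^+\}$; $UE_k^+=E_{k+1}^+$, $M^+_fE^+_k=f(x_k)E^+_k$, $\mathbb{K}E_k^+=kE_k^+$. $A=C^*(U,M^+_f:f\in C(G))$, $\mathcal{A}$ is the $*$-subalgebra generated by $U,U^*,M^+_\chi$ ($\chi\in\widehat G$). For $\theta\in\mathbb{R}$, $\rho_\theta(a)=e^{i\theta\mathbb{K}}ae^{-i\theta\mathbb{K}}$. The $n$-th Fourier component of a derivation $d:\mathcal A\to A$ is $d_n(a)=\frac{1}{2\pi}\int_0^{2\pi}e^{in\theta}\rho_\theta^{-1}\big(d(\rho_\theta(a))\big)\,d\theta$. *)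

(* Defs.v *)
From HB Require Import structures.
From mathcomp Require Import all_boot all_order all_algebra.
From mathcomp Require Import all_classical all_reals all_analysis.
From mathcomp Require Import complex.

Set Implicit Arguments.
Unset Strict Implicit.
Unset Printing Implicit Defensive.

Import Order.TTheory GRing.Theory Num.Theory.
Import numFieldNormedType.Exports.

Local Open Scope classical_set_scope.
Local Open Scope ring_scope.

(* Sequences nat -> R[i] model vectors of l^2(Z_{>=0}); operators are     *)
(* maps of sequences; only their action on l^2 is ever constrained.       *)

Section Defs.
Variable R : realType.

Local Notation C := (R[i]).

Definition cexpi (t : R) : C := Complex (cos t) (sin t).

Definition sqsum (x : nat -> C) : R ^nat :=
  series (fun k => Normc.normc (x k) ^+ 2).
Definition ell2 (x : nat -> C) : Prop := cvgn (sqsum x).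
Definition l2norm (x : nat -> C) : R := Num.sqrt (limn (sqsum x)).
Definition finsupp (x : nat -> C) : Prop :=
  exists N : nat, forall k, (N <= k)%N -> x k = 0.

Definition op := (nat -> C) -> (nat -> C).

Definition op_add (T S : op) : op := fun x k => T x k + S x k.
Definition op_scale (c : C) (T : op) : op := fun x k => c * T x k.
Definition op_mul (T S : op) : op := fun x => T (S x).

Definition opeq (T S : op) : Prop := forall x, ell2 x -> T x = S x.

Definition Ushift : op := fun x k => if k is k'.+1 then x k' else 0.
Definition Ushift_adj : op := fun x k => x k.+1.

(* M_f E_k = f(x_k) E_k with x_k = k x_1 *)
Definition Mult (G : zmodType) (x1 : G) (f : G -> C) : op :=
  fun x k => f (x1 *+ k) * x k.

(* rho_theta(a) = e^{i theta K} a e^{-i theta K}, K E_k = k E_k *)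
Definition rho (t : R) (a : op) : op :=
  fun x k => cexpi (t * k%:R) * a (fun j => cexpi (- (t * j%:R)) * x j) k.

(* continuous functions G -> C (C = R^2 with the product topology) *)
Definition continuousC (G : topologicalType) (f : G -> C) : Prop :=
  continuous (fun g => complex.Re (f g)) /\ continuous (fun g => complex.Im (f g)).

Definition is_character (G : topologicalZmodType) (chi : G -> C) : Prop :=
  continuousC chi /\ (forall g h, chi (g + h) = chi g * chi h) /\
  (forall g, Normc.normc (chi g) = 1).

Inductive alg_gen (gens : op -> Prop) : op -> Prop :=
| alg_gen_gen T : gens T -> alg_gen gens T
| alg_gen_add T S : alg_gen gens T -> alg_gen gens S -> alg_gen gens (op_add T S)
| alg_gen_scale c T : alg_gen gens T -> alg_gen gens (op_scale c T)
| alg_gen_mul T S : alg_gen gens T -> alg_gen gens S -> alg_gen gens (op_mul T S).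

(* \mathcal A = *-algebra generated by U, U^*, M_chi (chi in \hat G);
   the generating set is closed under adjoints (M_chi^* = M_{conj chi}). *)
Definition calA (G : topologicalZmodType) (x1 : G) : op -> Prop :=
  alg_gen (fun T => T = Ushift \/ T = Ushift_adj \/
                    exists chi, is_character chi /\ T = Mult x1 chi).

Definition algA0 (G : topologicalZmodType) (x1 : G) : op -> Prop :=
  alg_gen (fun T => T = Ushift \/ T = Ushift_adj \/
                    exists f, continuousC f /\ T = Mult x1 f).

(* A = C^*(U, M_f) = operator-norm closure of algA0 in B(l^2) *)
Definition inA (G : topologicalZmodType) (x1 : G) (T : op) : Prop :=
  (forall x, ell2 x -> ell2 (T x)) /\
  (exists M : R, forall x, ell2 x -> l2norm (T x) <= M * l2norm x) /\
  (forall eps : R, 0 < eps -> exists S, algA0 x1 S /\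
     forall x, ell2 x -> l2norm (fun k => T x k - S x k) <= eps * l2norm x).

Definition is_derivation (G : topologicalZmodType) (x1 : G) (d : op -> op) : Prop :=
  (forall a, calA x1 a -> inA x1 (d a)) /\
  (forall a b, calA x1 a -> calA x1 b -> opeq (d (op_add a b)) (op_add (d a) (d b))) /\
  (forall c a, calA x1 a -> opeq (d (op_scale c a)) (op_scale c (d a))) /\
  (forall a b, calA x1 a -> calA x1 b ->
     opeq (d (op_mul a b)) (op_add (op_mul (d a) b) (op_mul a (d b)))).

Definition cint02pi (f : R -> C) : C :=
  Complex (Rintegral (@lebesgue_measure R) `[0, 2 * pi] (fun t => complex.Re (f t)))
          (Rintegral (@lebesgue_measure R) `[0, 2 * pi] (fun t => complex.Im (f t))).

(* n-th Fourier component d_n(a) = (1/2pi) int_0^{2pi} e^{in theta}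
   rho_theta^{-1}(d(rho_theta(a))) d theta, applied to a vector x,
   the integral being taken coordinatewise. *)
Definition fourier_comp (d : op -> op) (n : int) (a : op) : op :=
  fun x i => ((2 * pi)^-1)%:C%C *
     cint02pi (fun t => cexpi (n%:~R * t) * rho (- t) (d (rho t a)) x i).

End Defs.

(* Main.v *)
Require Import Defs.
From HB Require Import structures.
From mathcomp Require Import all_boot all_order all_algebra.
From mathcomp Require Import all_classical all_reals all_analysis.
From mathcomp Require Import complex.
From mathcomp Require Import ring lra zify.
Import Order.TTheory GRing.Theory Num.Theory.
Import numFieldNormedType.Exports.
Local Open Scope classical_set_scope.
Local Open Scope ring_scope.
Section All.
Variable R : realType.
Local Notation C := (R[i]).
Local Notation mu := (@lebesgue_measure R).

Definition sqc (z : C) : R := complex.Re z ^+ 2 + complex.Im z ^+ 2.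

Lemma sqc_ge0 z : 0 <= sqc z.
Proof. by rewrite /sqc addr_ge0 // sqr_ge0. Qed.

Lemma normc2 (z : C) : Normc.normc z ^+ 2 = sqc z.
Proof. by case: z => a b; rewrite /Normc.normc /sqc /= sqr_sqrtr // addr_ge0 // sqr_ge0. Qed.

Lemma sqsumE (y : nat -> C) n : sqsum y n = \sum_(0 <= k < n) sqc (y k).
Proof. by rewrite /sqsum /series /=; apply: eq_bigr => k _; rewrite normc2. Qed.

Lemma sqsum_nd (y : nat -> C) : nondecreasing_seq (sqsum y).
Proof. by apply: nondecreasing_series => k _ _; exact: sqr_ge0. Qed.

Lemma ell2_bound (y : nat -> C) (B : R) : (forall n, sqsum y n <= B) -> ell2 y /\ limn (sqsum y) <= B.
Proof.
move=> hB.
have cv : ell2 y.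
  apply: nondecreasing_is_cvgn; first exact: sqsum_nd.
  by exists B => _ [n _ <-].
split => //; apply: limr_le => //; exact: nearW.
Qed.

Lemma sqsum_le_lim (y : nat -> C) : ell2 y -> forall n, sqsum y n <= limn (sqsum y).
Proof. by move=> hy n; apply: nondecreasing_cvgn_le => //; exact: sqsum_nd. Qed.

Lemma tail_small (y : nat -> C) : ell2 y -> forall e : R, 0 < e -> exists K, forall n, (K <= n)%N ->
  limn (sqsum y) - sqsum y n < e.
Proof.
move=> hy e he.
have := hy; move/cvgrPdist_lt => /(_ e he) [K _ hK].
exists K => n hn; have := hK n hn.
rewrite ger0_norm // subr_ge0; exact: sqsum_le_lim.
Qed.

Lemma Re_sum (I : Type) (Q : seq I) (z : I -> C) :
  complex.Re (\sum_(q <- Q) z q) = \sum_(q <- Q) complex.Re (z q).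
Proof.
elim: Q => [|p Q IH]; first by rewrite !big_nil.
rewrite !big_cons -IH; case: (z p) => ? ?; by case: (\sum_(q <- Q) z q).
Qed.

Lemma Im_sum (I : Type) (Q : seq I) (z : I -> C) :
  complex.Im (\sum_(q <- Q) z q) = \sum_(q <- Q) complex.Im (z q).
Proof.
elim: Q => [|p Q IH]; first by rewrite !big_nil.
rewrite !big_cons -IH; case: (z p) => ? ?; by case: (\sum_(q <- Q) z q).
Qed.

Lemma cs_aux (I : Type) (Q : seq I) (f : I -> R) (a : R) :
  2 * a * \sum_(q <- Q) f q <= (size Q)%:R * a ^+ 2 + \sum_(q <- Q) f q ^+ 2.
Proof.
elim: Q => [|p Q IH]; first by rewrite !big_nil mulr0 mul0r addr0.
rewrite !big_cons /= -natr1.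
have h : 2 * a * f p <= a ^+ 2 + f p ^+ 2.
  have := sqr_ge0 (a - f p); rewrite sqrrB; lra.
move: IH h; set S := \sum_(q <- Q) f q; set T := \sum_(q <- Q) f q ^+ 2; move=> IH h.
rewrite mulrDr mulrDl; lra.
Qed.

Lemma cs_real (I : Type) (Q : seq I) (f : I -> R) :
  (\sum_(q <- Q) f q) ^+ 2 <= (size Q)%:R * \sum_(q <- Q) f q ^+ 2.
Proof.
elim: Q => [|p Q IH]; first by rewrite !big_nil mul0r expr2 mulr0.
rewrite !big_cons /= -natr1.
have h := cs_aux _ Q f (f p).
move: IH h; set S := \sum_(q <- Q) f q; set T := \sum_(q <- Q) f q ^+ 2; move=> IH h.
rewrite sqrrD mulrDl mul1r; lra.
Qed.

Lemma cs_c (I : Type) (Q : seq I) (z : I -> C) :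
  sqc (\sum_(q <- Q) z q) <= (size Q)%:R * \sum_(q <- Q) sqc (z q).
Proof.
rewrite /sqc Re_sum Im_sum big_split /= mulrDr.
apply: lerD; exact: cs_real.
Qed.

Fixpoint allS {I : Type} (P : I -> Prop) (s : seq I) : Prop :=
  match s with [::] => True | q :: s' => P q /\ allS P s' end.

Lemma ler_sum_allS (I : Type) (P : I -> Prop) (Q : seq I) (F1 F2 : I -> R) :
  allS P Q -> (forall q, P q -> F1 q <= F2 q) ->
  \sum_(q <- Q) F1 q <= \sum_(q <- Q) F2 q.
Proof.
move=> + hF; elim: Q => [|p Q IH] /=; first by rewrite !big_nil.
by move=> [hp hQ]; rewrite !big_cons lerD // ?hF // IH.
Qed.

Definition trunc {I : Type} (Q : seq I) (v : I -> nat -> C) (b : I -> nat -> bool) : nat -> C :=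
  fun i => \sum_(q <- Q) (if b q i then v q i else 0).

Lemma sqc_if (bb : bool) (z : C) : sqc (if bb then z else 0) = if bb then sqc z else 0.
Proof. by case: bb; rewrite // /sqc /= expr2 mulr0 addr0. Qed.

Lemma trunc_sqsum_le (I : Type) (Q : seq I) v b n :
  sqsum (trunc Q v b) n <=
  (size Q)%:R * \sum_(q <- Q) \sum_(0 <= k < n) (if b q k then sqc (v q k) else 0).
Proof.
rewrite sqsumE.
apply: (@le_trans _ _ (\sum_(0 <= k < n) (size Q)%:R * \sum_(q <- Q) sqc (if b q k then v q k else 0))).
  by apply: ler_sum => k _; exact: cs_c.
rewrite -mulr_sumr exchange_big /= le_eqVlt; apply/orP; left; apply/eqP.
congr (_ * _); apply: eq_bigr => q _; apply: eq_bigr => k _; exact: sqc_if.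
Qed.

Lemma part_tail (y : nat -> C) (b : nat -> bool) K n : ell2 y ->
  (forall k, b k -> (K <= k)%N) ->
  \sum_(0 <= k < n) (if b k then sqc (y k) else 0) <= limn (sqsum y) - sqsum y K.
Proof.
move=> hy hb.
apply: (@le_trans _ _ (\sum_(0 <= k < n + K) (if (K <= k)%N then sqc (y k) else 0))).
  apply: (@le_trans _ _ (\sum_(0 <= k < n) (if (K <= k)%N then sqc (y k) else 0))).
    apply: ler_sum => k _; case hk: (b k); first by rewrite (hb _ hk).
    by case: ifP => _ //; exact: sqc_ge0.
  rewrite [X in _ <= X](big_cat_nat (n := n)) ?leq_addr //= lerDl.
  by apply: sumr_ge0 => k _; case: ifP => _ //; exact: sqc_ge0.
have e : \sum_(0 <= k < n + K) (if (K <= k)%N then sqc (y k) else 0) =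
   sqsum y (n + K) - sqsum y K.
  rewrite !sqsumE (big_cat_nat (n := K)) ?leq_addl //= [X in _ = X - _](big_cat_nat (n := K)) ?leq_addl //=.
  rewrite big1_seq ?add0r; last first.
    by move=> k /andP[_]; rewrite mem_index_iota => /andP[_ hk]; rewrite leqNgt hk.
  rewrite addrAC subrr add0r.
  by apply: eq_big_nat => k /andP[hk _]; rewrite hk.
rewrite e lerB // sqsum_le_lim //.
Qed.

Lemma trunc_ell2 (I : Type) (Q : seq I) v (b : I -> nat -> bool) :
  allS (fun q => ell2 (v q)) Q -> ell2 (trunc Q v b).
Proof.
move=> hQ.
suff hB : forall n, sqsum (trunc Q v b) n <= (size Q)%:R * \sum_(q <- Q) limn (sqsum (v q)).
  exact: (@ell2_bound _ _ hB).1.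
move=> n; apply: le_trans (@trunc_sqsum_le _ Q v b n) _.
apply: ler_wpM2l => //; apply: (@ler_sum_allS _ _ _ _ _ hQ) => q hq.
apply: le_trans (@part_tail _ _ 0 n hq _) _ => //.
by rewrite /sqsum /series /= big_geq // subr0.
Qed.

Lemma trunc_lim_le (I : Type) (Q : seq I) v (b : I -> nat -> bool) K :
  allS (fun q => ell2 (v q)) Q -> (forall q k, b q k -> (K <= k)%N) ->
  limn (sqsum (trunc Q v b)) <=
  (size Q)%:R * \sum_(q <- Q) (limn (sqsum (v q)) - sqsum (v q) K).
Proof.
move=> hQ hb.
suff hB : forall n, sqsum (trunc Q v b) n <=
   (size Q)%:R * \sum_(q <- Q) (limn (sqsum (v q)) - sqsum (v q) K).
  exact: (@ell2_bound _ _ hB).2.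
move=> n; apply: le_trans (@trunc_sqsum_le _ Q v b n) _.
apply: ler_wpM2l => //; apply: (@ler_sum_allS _ _ _ _ _ hQ) => q hq.
exact: (@part_tail _ _ _ _ hq (hb q)).
Qed.

Lemma sum_tails (I : Type) (Q : seq I) (v : I -> nat -> C) :
  allS (fun q => ell2 (v q)) Q -> forall e : R, 0 < e -> exists K, forall K', (K <= K')%N ->
  \sum_(q <- Q) (limn (sqsum (v q)) - sqsum (v q) K') < e.
Proof.
elim: Q => [|p Q IH] /=.
  by move=> _ e he; exists 0%N => K' _; rewrite big_nil.
move=> [hp hQ] e he.
have he2 : 0 < e / 2 by rewrite divr_gt0.
have [K1 h1] := @tail_small _ hp _ he2.
have [K2 h2] := IH hQ _ he2.
exists (maxn K1 K2) => K'; rewrite geq_max => /andP[k1 k2].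
rewrite big_cons [X in _ < X](splitr e); apply: ltrD; [exact: h1|exact: h2].
Qed.

Lemma trunc_small (I : Type) (Q : seq I) (v : I -> nat -> C) :
  allS (fun q => ell2 (v q)) Q -> forall e : R, 0 < e -> exists K, forall (b : I -> nat -> bool),
  (forall q k, b q k -> (K <= k)%N) -> l2norm (trunc Q v b) < e.
Proof.
move=> hQ e he.
set e' := e ^+ 2 / ((size Q)%:R + 1).
have he' : 0 < e' by rewrite divr_gt0 ?exprn_gt0 // ltr_wpDl.
have [K hK] := @sum_tails _ _ _ hQ _ he'.
exists K => b hb.
have h1 := @trunc_lim_le _ _ _ _ _ hQ hb.
have h2 := hK K (leqnn K).
have hs : 0 <= \sum_(q <- Q) (limn (sqsum (v q)) - sqsum (v q) K).
  apply: le_trans (@ler_sum_allS _ _ _ (fun _ => 0) _ hQ _); first by rewrite big1.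
  by move=> q hq; rewrite subr_ge0; exact: sqsum_le_lim.
have hn : 0 < (size Q)%:R + 1 :> R by rewrite ltr_wpDl.
have he2 : e ^+ 2 = ((size Q)%:R + 1) * e' by rewrite /e' mulrCA divff ?mulr1 // gt_eqF.
rewrite /l2norm -(ger0_norm (ltW he)) -sqrtr_sqr ltr_sqrt ?exprn_gt0 //.
apply: (le_lt_trans h1).
apply: (@le_lt_trans _ _ ((size Q)%:R * e')).
  by apply: ler_wpM2l => //; apply: ltW.
rewrite he2 mulrDl mul1r ltrDl //.
Qed.

Lemma RFTC (f F : R -> R) (a b : R) : a < b -> continuous f ->
  (forall x : R, is_derive x (1:R) F (f x)) ->
  Rintegral mu `[a, b] f = F b - F a.
Proof.
move=> ab cf dF.
have dF' : forall x : R, derivable F x 1 by move=> x; exact: ex_derive.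
have cF : continuous F by move=> x; have := dF' x; move=> h; exact/differentiable_continuous/derivable1_diffP.
rewrite /Rintegral (@continuous_FTC2 _ f F a b ab) //.
- exact/continuous_subspaceT.
- split.
  + by move=> x _; exact: dF'.
  + exact: cvg_at_right_filter (cF a).
  + exact: cvg_at_left_filter (cF b).
- by move=> x _; rewrite derive1E derive_val.
Qed.

Lemma sin_int2pi (k : int) : sin (k%:~R * (2 * pi)) = 0 :> R.
Proof.
have hn : forall n : nat, sin (n%:R * (2 * pi)) = 0 :> R.
  move=> n; have := periodicn (@sinD2pi R) n 0; rewrite add0r sin0 => <-.
  by congr sin; rewrite -mulrnA -[RHS]mulr_natr natrM [RHS]mulrC -[RHS]mulrA [LHS]mulrCA.
case: k => m; first exact: hn.
by rewrite NegzE intrN mulNr sinN -pmulrn (hn m.+1) oppr0.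
Qed.


Lemma cos_int2pi (k : int) : cos (k%:~R * (2 * pi)) = 1 :> R.
Proof.
have hn : forall n : nat, cos (n%:R * (2 * pi)) = 1 :> R.
  move=> n; rewrite -[RHS]cos0 -(periodicn (@cosD2pi R) n 0) add0r.
  by congr cos; rewrite -mulrnA -[RHS]mulr_natr natrM [RHS]mulrC -[RHS]mulrA [LHS]mulrCA.
case: k => m; first exact: hn.
by rewrite NegzE intrN mulNr cosN -pmulrn (hn m.+1).
Qed.

Lemma deriv_lin (kR x : R) : kR != 0 ->
  is_derive x (1:R) (kR^-1 \*: (sin \o (kR \*: (@id R)))) (cos (kR * x)).
Proof.
move=> k0.
have h1 : is_derive x (1:R) (kR \*: (@id R)) (kR *: 1) by apply: is_deriveZ.
have h2 := is_derive1_comp (is_derive_sin ((kR \*: (@id R)) x)) h1.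
apply: is_derive_eq (is_deriveZ kR^-1 h2) _.
by rewrite /= /GRing.scale /= mulr1 mulrCA mulVf // mulr1.
Qed.

Lemma int_cos (k : int) : Rintegral mu `[0, 2 * pi] (fun t => cos (k%:~R * t)) =
  if k == 0 then 2 * pi else 0.
Proof.
have p0 : (0 : R) < 2 * pi by rewrite mulr_gt0 // pi_gt0.
case: eqP => [->|/eqP k0].
  have -> : (fun t : R => cos (0%:~R * t)) = (fun t => 1).
    by apply: funext => t; rewrite mul0r cos0.
  rewrite (@RFTC _ id 0 (2 * pi) p0) ?subr0 //; first exact: cst_continuous.
have kR0 : (k%:~R : R) != 0 by rewrite intr_eq0.
rewrite (@RFTC (fun t => cos (k%:~R * t)) _ 0 (2 * pi) p0 _ (fun x => deriv_lin _ x kR0)).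
  by rewrite /= /GRing.scale /= mulr0 sin0 sin_int2pi mulr0 subrr.
by move=> x; apply: continuous_comp; [exact: mulrl_continuous|exact: continuous_cos].
Qed.


Lemma deriv_lin2 (kR x : R) : kR != 0 ->
  is_derive x (1:R) ((- kR^-1) \*: (cos \o (kR \*: (@id R)))) (sin (kR * x)).
Proof.
move=> k0.
have h1 : is_derive x (1:R) (kR \*: (@id R)) (kR *: 1) by apply: is_deriveZ.
have h2 := is_derive1_comp (is_derive_cos ((kR \*: (@id R)) x)) h1.
apply: is_derive_eq (is_deriveZ (- kR^-1) h2) _.
by rewrite /= /GRing.scale /= mulr1 mulNr mulNr mulrN opprK mulrCA mulVf // mulr1.
Qed.

Lemma cont_lin_cos (kR : R) : continuous (fun t => cos (kR * t)).
Proof. by move=> x; apply: continuous_comp; [exact: mulrl_continuous|exact: continuous_cos]. Qed.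
Lemma cont_lin_sin (kR : R) : continuous (fun t => sin (kR * t)).
Proof. by move=> x; apply: continuous_comp; [exact: mulrl_continuous|exact: continuous_sin]. Qed.

Lemma int_sin (k : int) : Rintegral mu `[0, 2 * pi] (fun t => sin (k%:~R * t)) = 0.
Proof.
have p0 : (0 : R) < 2 * pi by rewrite mulr_gt0 // pi_gt0.
have [->|k0] := eqVneq k 0.
  have -> : (fun t : R => sin (0%:~R * t)) = (fun t => 0).
    by apply: funext => t; rewrite mul0r sin0.
  rewrite (@RFTC _ (cst 0) 0 (2 * pi) p0) ?subr0 //; first exact: cst_continuous.
have kR0 : (k%:~R : R) != 0 by rewrite intr_eq0.
rewrite (@RFTC (fun t => sin (k%:~R * t)) _ 0 (2 * pi) p0 _ (fun x => deriv_lin2 _ x kR0)).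
  by rewrite /= /GRing.scale /= mulr0 cos0 cos_int2pi subrr.
exact: cont_lin_sin.
Qed.

Lemma cont_sum (I : Type) (Q : seq I) (F : I -> R -> R) :
  (forall q, continuous (F q)) -> continuous (fun t => \sum_(q <- Q) F q t).
Proof.
move=> hF; elim: Q => [|p Q IH].
  have -> : (fun t => \sum_(q <- [::]) F q t) = (fun _ => 0).
    by apply: funext => t; rewrite big_nil.
  exact: cst_continuous.
have -> : (fun t => \sum_(q <- p :: Q) F q t) = F p + (fun t => \sum_(q <- Q) F q t).
  by apply: funext => t; rewrite big_cons.
by move=> x; exact: (continuousD (hF p x) (IH x)).
Qed.

Lemma cont_int (f : R -> R) : continuous f -> mu.-integrable `[0, 2 * pi] (EFin \o f).
Proof.
move=> cf; apply: continuous_compact_integrable; first exact: segment_compact.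
exact: continuous_subspaceT.
Qed.

Definition trigf (a b : R) (k : int) (t : R) := a * cos (k%:~R * t) + b * sin (k%:~R * t).

Lemma cont_trigf a b k : continuous (trigf a b k).
Proof.
move=> x; exact: (continuousD (continuousM (@cst_continuous _ _ a x) (cont_lin_cos _ x))
  (continuousM (@cst_continuous _ _ b x) (cont_lin_sin _ x))).
Qed.

Lemma int_trig_sum (I : Type) (Q : seq I) (a b : I -> R) (k : I -> int) :
  Rintegral mu `[0, 2 * pi] (fun t => \sum_(q <- Q) trigf (a q) (b q) (k q) t) =
  \sum_(q <- Q) a q * (if k q == 0 then 2 * pi else 0).
Proof.
have mD : measurable (`[0, 2 * pi] : set R) by exact: measurable_itv.
elim: Q => [|p Q IH].
  have -> : (fun t => \sum_(q <- [::]) trigf (a q) (b q) (k q) t) = (fun _ => 0).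
    by apply: funext => t; rewrite big_nil.
  by rewrite Rintegral_cst // mul0r big_nil.
have -> : (fun t => \sum_(q <- p :: Q) trigf (a q) (b q) (k q) t) =
   (fun t => trigf (a p) (b p) (k p) t + \sum_(q <- Q) trigf (a q) (b q) (k q) t).
  by apply: funext => t; rewrite big_cons.
rewrite RintegralD //; first last.
- by apply: cont_int; apply: cont_sum => q; exact: cont_trigf.
- exact/cont_int/cont_trigf.
rewrite IH big_cons; congr (_ + _).
rewrite /trigf RintegralD //; first last.
- by apply: cont_int; move=> x; apply: continuousM; [exact: cst_continuous|exact: cont_lin_sin].
- by apply: cont_int; move=> x; apply: continuousM; [exact: cst_continuous|exact: cont_lin_cos].
rewrite RintegralZl //; last exact/cont_int/cont_lin_cos.
rewrite RintegralZl //; last exact/cont_int/cont_lin_sin.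
by rewrite int_cos int_sin mulr0 addr0.
Qed.

Lemma cint_sum (I : Type) (Q : seq I) (c : I -> C) (k : I -> int) :
  cint02pi (fun t => \sum_(q <- Q) c q * cexpi ((k q)%:~R * t)) =
  \sum_(q <- Q) c q * (if k q == 0 then ((2 * pi)%:C)%C else 0).
Proof.
rewrite /cint02pi.
have -> : (fun t => complex.Re (\sum_(q <- Q) c q * cexpi ((k q)%:~R * t))) =
  (fun t => \sum_(q <- Q) trigf (complex.Re (c q)) (- complex.Im (c q)) (k q) t).
  apply: funext => t; rewrite Re_sum; apply: eq_bigr => q _.
  by rewrite /trigf /cexpi; case: (c q) => a b; simpc.
have -> : (fun t => complex.Im (\sum_(q <- Q) c q * cexpi ((k q)%:~R * t))) =
  (fun t => \sum_(q <- Q) trigf (complex.Im (c q)) (complex.Re (c q)) (k q) t).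
  apply: funext => t; rewrite Im_sum; apply: eq_bigr => q _.
  by rewrite /trigf /cexpi; case: (c q) => a b; simpc; rewrite /= addrC.
rewrite !int_trig_sum.
set Z := (X in _ = X).
have -> : Z = Complex (complex.Re Z) (complex.Im Z) by case: Z.
rewrite /Z Re_sum Im_sum; congr Complex; apply: eq_bigr => q _;
  by case: (k q == 0); case: (c q) => a b; simpc.
Qed.
Local Notation op := (op R).
Variables (G : topologicalZmodType) (x1 : G).

Lemma cexpiD (a b : R) : cexpi (a + b) = cexpi a * cexpi b.
Proof. rewrite /cexpi; simpc; rewrite sinD cosD; congr Complex; ring. Qed.
Lemma cexpi0 : cexpi 0 = 1 :> R[i].
Proof. by rewrite /cexpi sin0 cos0. Qed.
Lemma cexpiN (a : R) : cexpi (- a) * cexpi a = 1.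
Proof. by rewrite -cexpiD addNr cexpi0. Qed.

Definition opsum {I : Type} (s : seq I) (F : I -> op) : op :=
  fun x k => \sum_(p <- s) F p x k.

Definition lin (T : op) :=
  (forall y z, T (fun k => y k + z k) = fun k => T y k + T z k) /\
  (forall c y, T (fun k => c * y k) = fun k => c * T y k).

Lemma lin0 T : lin T -> T (fun _ => 0) = fun _ => 0.
Proof.
move=> [_ hs]; have := hs 0 (fun _ => 0).
have -> : (fun k : nat => (0:C) * 0) = (fun _ => 0) by apply: funext => k; rewrite mulr0.
by move=> ->; apply: funext => k; rewrite mul0r.
Qed.

Lemma linsum T (I : Type) (s : seq I) (c : I -> C) (F : I -> nat -> C) : lin T ->
  T (fun k => \sum_(p <- s) c p * F p k) = fun k => \sum_(p <- s) c p * T (F p) k.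
Proof.
move=> hT; elim: s => [|p s IH].
  have -> : (fun k : nat => \sum_(p <- [::]) c p * F p k) = (fun _ => 0).
    by apply: funext => k; rewrite big_nil.
  by rewrite lin0 //; apply: funext => k; rewrite big_nil.
have -> : (fun k => \sum_(q <- p :: s) c q * F q k) =
   (fun k => (fun k => c p * F p k) k + (fun k => \sum_(q <- s) c q * F q k) k).
  by apply: funext => k; rewrite big_cons.
rewrite hT.1 IH hT.2; apply: funext => k; by rewrite big_cons.
Qed.

Lemma calA_lin a : calA x1 a -> lin a.
Proof.
elim => {a}.
- move=> T [->|[->|[chi [_ ->]]]].
  + split=> [y z|c y]; apply: funext => -[|k] //=; by rewrite ?addr0 ?mulr0.
  + by split.
  + split=> [y z|c y]; apply: funext => k; rewrite /Mult; [exact: mulrDr|exact: mulrCA].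
- move=> T S _ [hT1 hT2] _ [hS1 hS2]; split=> [y z|c y]; apply: funext => k;
  rewrite /op_add ?hT1 ?hS1 ?hT2 ?hS2; [ring|ring].
- move=> c T _ [hT1 hT2]; split=> [y z|c' y]; apply: funext => k;
  rewrite /op_scale ?hT1 ?hT2; ring.
- move=> T S _ [hT1 hT2] _ [hS1 hS2]; split=> [y z|c y]; apply: funext => k;
  by rewrite /op_mul ?hS1 ?hT1 ?hS2 ?hT2.
Qed.

Fixpoint allA (s : seq (int * op)) : Prop :=
  match s with [::] => True | p :: s' => calA x1 p.2 /\ allA s' end.

Lemma allA_cat s1 s2 : allA s1 -> allA s2 -> allA (s1 ++ s2).
Proof. by elim: s1 => //= p s IH [? ?] ?; split => //; apply: IH. Qed.

Lemma allA_map (f : int * op -> int * op) s :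
  (forall p, calA x1 p.2 -> calA x1 (f p).2) -> allA s -> allA (map f s).
Proof. by move=> hf; elim: s => //= p s IH [? ?]; split; [apply: hf|apply: IH]. Qed.

Lemma eq_big_allA (V : Type) (idx : V) (op0 : V -> V -> V) s (F1 F2 : int * op -> V) :
  allA s -> (forall p, calA x1 p.2 -> F1 p = F2 p) ->
  \big[op0/idx]_(p <- s) F1 p = \big[op0/idx]_(p <- s) F2 p.
Proof.
move=> + hF; elim: s => [|p s IH] /=; first by rewrite !big_nil.
by move=> [hp hs]; rewrite !big_cons hF // IH.
Qed.

Definition rhoexp (s : seq (int * op)) (t : R) : op :=
  opsum s (fun p => op_scale (cexpi (p.1%:~R * t)) p.2).

Lemma calA_dec a : calA x1 a -> exists s, allA s /\ forall t, rho t a = rhoexp s t.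
Proof.
elim => {a}.
- move=> T [->|[->|[chi [hchi ->]]]].
  + exists [:: (1%Z, @Ushift R)]; split; first by split=> //; apply: alg_gen_gen; left.
    move=> t /=; apply: funext => x; apply: funext => -[|k];
    rewrite /rho /rhoexp /opsum big_seq1 /op_scale /=; first by rewrite !mulr0.
    rewrite mulrA -cexpiD; congr (cexpi _ * _).
    by rewrite -natr1 mulr1z; ring.
  + exists [:: ((-1)%Z, @Ushift_adj R)]; split; first by split=> //; apply: alg_gen_gen; right; left.
    move=> t /=; apply: funext => x; apply: funext => k;
    rewrite /rho /rhoexp /opsum big_seq1 /op_scale /=.
    rewrite mulrA -cexpiD; congr (cexpi _ * _).
    by rewrite -natr1 mulrN1z; ring.
  + exists [:: (0%Z, Mult x1 chi)]; split.
      by split=> //; apply: alg_gen_gen; right; right; exists chi.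
    move=> t /=; apply: funext => x; apply: funext => k;
    rewrite /rho /rhoexp /opsum big_seq1 /op_scale /Mult /=.
    rewrite mul0r cexpi0 mul1r mulrCA; congr (_ * _); by rewrite mulrA -cexpiD addrN cexpi0 mul1r.
- move=> T S _ [s1 [h1 e1]] _ [s2 [h2 e2]]; exists (s1 ++ s2); split; first exact: allA_cat.
  move=> t.
  have -> : rho t (op_add T S) = op_add (rho t T) (rho t S).
    by apply: funext => y; apply: funext => i; rewrite /rho /op_add mulrDr.
  rewrite e1 e2; apply: funext => x; apply: funext => k.
  by rewrite /op_add /rhoexp /opsum big_cat.
- move=> c T _ [s1 [h1 e1]]; exists (map (fun p => (p.1, op_scale c p.2)) s1); split.
    by apply: allA_map => // p hp; apply: alg_gen_scale.
  move=> t; apply: funext => x; apply: funext => k.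
  rewrite /rhoexp /opsum big_map /=.
  have -> : rho t (op_scale c T) x k = c * rho t T x k by rewrite /rho /op_scale mulrCA.
  rewrite e1 /rhoexp /opsum mulr_sumr; apply: eq_bigr => p _; rewrite /op_scale; ring.
- move=> T S _ [s1 [h1 e1]] _ [s2 [h2 e2]].
  exists [seq (p.1 + q.1, op_mul p.2 q.2)%R | p <- s1, q <- s2]; split.
    elim: s1 h1 {e1} => //= p s IH [hp hs]; apply: allA_cat; last exact: IH.
    by apply: allA_map => // q hq; apply: alg_gen_mul.
  move=> t; apply: funext => x; apply: funext => k.
  have -> : rho t (op_mul T S) = op_mul (rho t T) (rho t S).
    apply: funext => y; apply: funext => i; rewrite /rho /op_mul; congr (_ * T _ i).
    by apply: funext => j; rewrite mulrA cexpiN mul1r.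
  rewrite e1 e2 /op_mul /rhoexp /opsum /op_scale big_allpairs_dep.
  apply: eq_big_allA => // p hp.
  rewrite (@linsum _ _ _ _ _ (calA_lin _ hp)) mulr_sumr; apply: eq_bigr => q _ /=.
  by rewrite intrD mulrDl cexpiD mulrA.
Qed.

Variable d : op -> op.
Hypothesis hd : is_derivation x1 d.

Definition opz : op := fun x k => 0.

Lemma calA_opz : calA x1 opz.
Proof.
have -> : opz = op_scale 0 (@Ushift R).
  by apply: funext => x; apply: funext => k; rewrite /op_scale mul0r.
by apply: alg_gen_scale; apply: alg_gen_gen; left.
Qed.

Lemma calA_opsum (I : Type) (s : seq I) (F : I -> op) :
  (forall p, calA x1 (F p)) -> calA x1 (opsum s F).
Proof.
move=> hF; elim: s => [|p s IH].
  have -> : opsum [::] F = opz by apply: funext => x; apply: funext => k; rewrite /opsum big_nil.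
  exact: calA_opz.
have -> : opsum (p :: s) F = op_add (F p) (opsum s F).
  by apply: funext => x; apply: funext => k; rewrite /opsum /op_add big_cons.
by apply: alg_gen_add; [apply: hF|exact: IH].
Qed.

Lemma d_opsum (I : Type) (s : seq I) (F : I -> op) :
  (forall p, calA x1 (F p)) -> opeq (d (opsum s F)) (opsum s (fun p => d (F p))).
Proof.
case: hd => _ [hadd [hsc _]] hF; elim: s => [|p s IH] x hx.
  have E : opsum [::] F = op_scale 0 opz.
    by apply: funext => y; apply: funext => k; rewrite /opsum /op_scale big_nil mul0r.
  rewrite E hsc //; last exact: calA_opz.
  by apply: funext => k; rewrite /op_scale /opsum big_nil mul0r.
have -> : opsum (p :: s) F = op_add (F p) (opsum s F).
  by apply: funext => y; apply: funext => k; rewrite /opsum /op_add big_cons.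
rewrite hadd //; last exact: calA_opsum.
by apply: funext => k; rewrite /op_add IH // /opsum big_cons.
Qed.

Lemma d_opsumZ (I : Type) (s : seq I) (c : I -> C) (F : I -> op) :
  (forall p, calA x1 (F p)) ->
  forall x, ell2 x -> d (opsum s (fun p => op_scale (c p) (F p))) x =
    fun k => \sum_(p <- s) c p * d (F p) x k.
Proof.
case: hd => _ [hadd [hsc _]] hF x hx.
have hF' : forall p, calA x1 (op_scale (c p) (F p)) by move=> p; apply: alg_gen_scale; apply: hF.
rewrite (@d_opsum _ s _ hF' x hx).
by apply: funext => k; rewrite /opsum; apply: eq_bigr => p _; rewrite hsc.
Qed.

Lemma d_lin (b : op) (I : Type) (s : seq I) (c : I -> C) (F : I -> op) :
  calA x1 b -> (forall p, calA x1 (F p)) ->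
  forall x, ell2 x ->
  d b (fun k => \sum_(p <- s) c p * F p x k) = fun k => \sum_(p <- s) c p * d b (F p x) k.
Proof.
move=> hb hF x hx; have hd' := hd; case: hd' => _ [hadd [hsc hmul]].
set Q := opsum s (fun p => op_scale (c p) (F p)).
have hQ : calA x1 Q by apply: calA_opsum => p; apply: alg_gen_scale; apply: hF.
have e1 := hmul _ _ hb hQ x hx.
have hbl := calA_lin _ hb.
have bQ : op_mul b Q = opsum s (fun p => op_scale (c p) (op_mul b (F p))).
  apply: funext => y; apply: funext => k; rewrite /op_mul /Q /opsum /op_scale.
  by rewrite (@linsum _ _ _ _ _ hbl).
rewrite bQ d_opsumZ // in e1; last by move=> p; apply: alg_gen_mul; [exact: hb|apply: hF].
have dQ : d Q x = fun k => \sum_(p <- s) c p * d (F p) x k by rewrite /Q d_opsumZ.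
change (d b (Q x) = fun k => \sum_(p <- s) c p * d b (F p x) k).
apply: funext => k; have := congr1 (fun f => f k) e1.
rewrite /op_add /op_mul dQ (@linsum _ _ _ _ _ hbl) => e2.
apply: (addIr (\sum_(p <- s) c p * b (d (F p) x) k)).
rewrite -e2.
under eq_bigr => p _ do rewrite hmul // /op_add /op_mul mulrDr.
by rewrite big_split.
Qed.

Definition cl (T : op) : op := if `[< calA x1 T >] then T else opz.
Lemma calA_cl T : calA x1 (cl T).
Proof. by rewrite /cl; case: asboolP => // _; exact: calA_opz. Qed.
Lemma clE T : calA x1 T -> cl T = T.
Proof. by rewrite /cl; case: asboolP. Qed.

Fixpoint Lop (n : nat) : op := match n with
  | 0 => op_mul (@Ushift_adj R) (@Ushift R)
  | n'.+1 => op_mul (@Ushift R) (op_mul (Lop n') (@Ushift_adj R)) end.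

Lemma LopE n y k : Lop n y k = if (n <= k)%N then y k else 0.
Proof.
elim: n y k => [|n IH] y [|k] //=; rewrite /op_mul /Ushift_adj /Ushift //.
by rewrite IH.
Qed.

Lemma calA_Lop n : calA x1 (Lop n).
Proof.
elim: n => [|n IH] /=.
  by apply: alg_gen_mul; apply: alg_gen_gen; [right; left|left].
apply: alg_gen_mul; first by apply: alg_gen_gen; left.
by apply: alg_gen_mul => //; apply: alg_gen_gen; right; left.
Qed.

Definition pj (j : nat) : op := fun y k => if k == j then y k else 0.

Lemma calA_pj j : calA x1 (pj j).
Proof.
have -> : pj j = op_add (Lop j) (op_scale (-1) (Lop j.+1)).
  apply: funext => y; apply: funext => k; rewrite /op_add /op_scale !LopE /pj.
  case: (ltngtP k j) => h.
  - by rewrite mulr0 addr0.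
  - by rewrite mulN1r subrr.
  - by rewrite mulr0 addr0.
apply: alg_gen_add; first exact: calA_Lop.
by apply: alg_gen_scale; exact: calA_Lop.
Qed.

Lemma sqc0 : sqc 0 = 0.
Proof. by rewrite /sqc /= expr2 mulr0 addr0. Qed.

Lemma finsupp_ell2 (y : nat -> C) N : (forall k, (N <= k)%N -> y k = 0) -> ell2 y.
Proof.
move=> hy; suff hB : forall n, sqsum y n <= sqsum y N by exact: (@ell2_bound y _ hB).1.
move=> n.
case: (leqP n N) => h; first by apply: sqsum_nd.
rewrite !sqsumE (big_cat_nat (n := N)) //=; last exact: ltnW.
rewrite [X in _ + X]big1_seq ?addr0 // => k /andP[_]; rewrite mem_index_iota => /andP[hk _].
by rewrite hy // sqc0.
Qed.

Lemma fin_expand (x : nat -> C) N (c : nat -> C) : (forall k, (N <= k)%N -> x k = 0) ->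
  (fun k => c k * x k) = fun k => \sum_(0 <= j < N) c j * pj j x k.
Proof.
move=> hx; apply: funext => k; rewrite /pj big_mkord.
case: (ltnP k N) => hk.
  rewrite (bigD1 (Ordinal hk)) //= eqxx big1 ?addr0 // => j hj.
  case: eqP => [hjk|]; last by rewrite mulr0.
  by move: hj; rewrite (_ : j = Ordinal hk) ?eqxx //; apply: val_inj.
rewrite hx // mulr0 big1 // => j _.
rewrite (_ : (k == j) = false) ?mulr0 //.
by apply/negbTE; rewrite neq_ltn (leq_trans (ltn_ord j) hk) orbT.
Qed.

Lemma rho0 (T : op) : rho 0 T = T.
Proof.
apply: funext => x; apply: funext => k; rewrite /rho.
have -> : (fun j => cexpi (- (0 * j%:R)) * x j) = x.
  by apply: funext => j; rewrite mul0r oppr0 cexpi0 mul1r.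
by rewrite mul0r cexpi0 mul1r.
Qed.

Lemma ind_sum (L : nat) (m : int) (z : C) :
  \sum_(j < L) (if j%:Z == m then z else 0) = if (0 <= m) && (m < L%:Z) then z else 0.
Proof.
case: m => n; last by rewrite big1.
rewrite ltz_nat /=; case: (ltnP n L) => hn.
  rewrite (bigD1 (Ordinal hn)) //= eqxx big1 ?addr0 // => j hj.
  rewrite eqz_nat; case: eqP => // hjn.
  by move: hj; rewrite (_ : j = Ordinal hn) ?eqxx //; apply: val_inj.
rewrite big1 // => j _; rewrite eqz_nat (_ : (j == n :> nat) = false) //.
by apply/negbTE; rewrite neq_ltn (leq_trans (ltn_ord j) hn).
Qed.

Lemma allS_impl (I : Type) (P P' : I -> Prop) (Q : seq I) :
  allS P Q -> (forall q, P q -> P' q) -> allS P' Q.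
Proof. by move=> + h; elim: Q => //= p Q IH [hp hQ]; split; [apply: h|apply: IH]. Qed.

Lemma allS_all (I : Type) (P : I -> Prop) (Q : seq I) : (forall q, P q) -> allS P Q.
Proof. by move=> h; elim: Q => //= p Q IH; split. Qed.

Lemma allS_le_sum (I : Type) (Q : seq I) (f : I -> nat) :
  allS (fun q => (f q <= \sum_(q <- Q) f q)%N) Q.
Proof.
elim: Q => //= p Q IH; rewrite big_cons; split; first exact: leq_addr.
by apply: (@allS_impl _ _ _ _ IH) => q h; apply: (leq_trans h); exact: leq_addl.
Qed.

Lemma eq_big_allS (I : Type) (P : I -> Prop) (Q : seq I) (F1 F2 : I -> C) :
  allS P Q -> (forall q, P q -> F1 q = F2 q) ->
  \sum_(q <- Q) F1 q = \sum_(q <- Q) F2 q.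
Proof.
move=> + hF; elim: Q => [|p Q IH] /=; first by rewrite !big_nil.
by move=> [hp hQ]; rewrite !big_cons hF // IH.
Qed.

Lemma ell2N (y : nat -> C) : ell2 y -> ell2 (fun i => - y i).
Proof.
rewrite /ell2.
have -> : sqsum (fun i => - y i) = sqsum y.
  apply: funext => n; rewrite !sqsumE; apply: eq_bigr => k _.
  by rewrite /sqc; case: (y k) => a b /=; rewrite !sqrrN.
by [].
Qed.

Lemma inv2pi : ((2 * pi)^-1)%:C%C * ((2 * pi)%:C)%C = 1 :> C.
Proof.
have p0 : (2 * pi : R) != 0 by rewrite mulf_neq0 // gt_eqF // pi_gt0.
rewrite -!complexr0; simpc; by rewrite mulVf.
Qed.

Lemma claimA (a : op) (s : seq (int * op)) (x : nat -> C) (N0 : nat) :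
  allA s -> (forall t, rho t a = rhoexp s t) -> (forall k, (N0 <= k)%N -> x k = 0) ->
  forall t i, rho (- t) (d (rho t a)) x i =
    \sum_(q <- [seq (p, j) | p <- s, j <- index_iota 0 N0])
      cexpi (((q.1.1 + q.2%:Z) - i%:Z)%:~R * t) * d (cl q.1.2) (pj q.2 x) i.
Proof.
move=> hs e hx t i.
have hxl : ell2 x := @finsupp_ell2 _ _ hx.
have ra : rho t a = opsum s (fun p => op_scale (cexpi (p.1%:~R * t)) (cl p.2)).
  rewrite e /rhoexp /opsum; apply: funext => y; apply: funext => k.
  by apply: eq_big_allA => // p hp; rewrite clE.
rewrite ra /rho.
set y := (fun j => cexpi (- (- t * j%:R)) * x j).
have hy : y = fun k => \sum_(0 <= j < N0) cexpi (t * j%:R) * pj j x k.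
  rewrite -(@fin_expand x N0 (fun j => cexpi (t * j%:R)) hx).
  by apply: funext => j; rewrite /y mulNr opprK.
have hyl : ell2 y.
  by apply: (@finsupp_ell2 _ N0) => k hk; rewrite /y hx ?mulr0.
rewrite (@d_opsumZ _ s (fun p => cexpi (p.1%:~R * t)) (fun p => cl p.2) (fun p => calA_cl _) y hyl).
rewrite big_allpairs_dep mulr_sumr; apply: eq_bigr => p _.
rewrite hy (@d_lin (cl p.2) _ _ _ _ (calA_cl _) calA_pj x hxl).
rewrite !mulr_sumr; apply: eq_bigr => j _ /=.
rewrite !mulrA -!cexpiD; congr (cexpi _ * _).
rewrite intrB intrD -!pmulrn; ring.
Qed.

Lemma main_res (a : op) : calA x1 a -> forall x : nat -> C, finsupp x ->
    (forall M N : nat,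
       ell2 (fun i => \sum_(j < M + N + 1) fourier_comp d (j%:Z - M%:Z) a x i)) /\
    (forall eps : R, 0 < eps -> exists K : nat, forall M N : nat,
       (K <= M)%N -> (K <= N)%N ->
       l2norm (fun i => \sum_(j < M + N + 1) fourier_comp d (j%:Z - M%:Z) a x i
                        - d a x i) < eps).
Proof.
move=> ha x [N0 hx].
have [s [hs e]] := calA_dec _ ha.
set Q := [seq (p, j) | p <- s, j <- index_iota 0 N0].
set o := fun q : (int * op) * nat => q.1.1 + q.2%:Z.
set v := fun (q : (int * op) * nat) (i : nat) => d (cl q.1.2) (pj q.2 x) i.
have hxl : ell2 x := @finsupp_ell2 _ _ hx.
have hv : forall q, ell2 (v q).
  move=> q; have [hA _] := hd; have [h1 _] := hA _ (calA_cl q.1.2).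
  apply: h1; apply: (@finsupp_ell2 _ q.2.+1) => k hk; rewrite /pj.
  by rewrite (_ : (k == q.2) = false) //; apply/negbTE; rewrite neq_ltn hk orbT.
have hvQ : allS (fun q => ell2 (v q)) Q := @allS_all _ _ _ hv.
have hA := @claimA a s x N0 hs e hx.
have E1 : forall (n : int) i, fourier_comp d n a x i =
    \sum_(q <- Q) (if n + o q == i%:Z then v q i else 0).
  move=> n i; rewrite /fourier_comp.
  have -> : (fun t => cexpi (n%:~R * t) * rho (- t) (d (rho t a)) x i) =
      (fun t => \sum_(q <- Q) v q i * cexpi ((n + o q - i%:Z)%:~R * t)).
    apply: funext => t; rewrite hA mulr_sumr; apply: eq_bigr => q _.
    rewrite mulrA -cexpiD mulrC; congr (_ * cexpi _).
    by rewrite /o !intrB !intrD; ring.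
  rewrite cint_sum mulr_sumr; apply: eq_bigr => q _.
  rewrite subr_eq0; case: ifP => _; last by rewrite !mulr0.
  by rewrite mulrCA inv2pi mulr1.
have E2 : forall i, d a x i = \sum_(q <- Q) v q i.
  move=> i; have := hA 0 i; rewrite oppr0 !rho0 => ->.
  by apply: eq_bigr => q _; rewrite mulr0 cexpi0 mul1r.
set bin := fun (M N : nat) (q : (int * op) * nat) (i : nat) =>
  (0 <= i%:Z - o q + M%:Z) && (i%:Z - o q + M%:Z < (M + N + 1)%N%:Z).
have P : forall M N i, \sum_(j < M + N + 1) fourier_comp d (j%:Z - M%:Z) a x i =
    trunc Q v (bin M N) i.
  move=> M N i; under eq_bigr => j _ do rewrite E1.
  rewrite exchange_big /trunc; apply: eq_bigr => q _.
  rewrite -ind_sum; apply: eq_bigr => j _.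
  have -> : (j%:Z - M%:Z + o q == i%:Z) = (j%:Z == i%:Z - o q + M%:Z).
    by apply/eqP/eqP => h; lia.
  by [].
split.
  move=> M N.
  have -> : (fun i => \sum_(j < M + N + 1) fourier_comp d (j%:Z - M%:Z) a x i) =
     trunc Q v (bin M N) by apply: funext => i; exact: P.
  exact: trunc_ell2.
move=> eps heps.
set B := \sum_(q <- Q) `|o q|%N.
have hB : allS (fun q => (`|o q| <= B)%N) Q := allS_le_sum _ _ _.
have hvN : allS (fun q => ell2 (fun i => - v q i)) Q.
  by apply: allS_all => q; apply: ell2N.
have [K0 hK0] := @trunc_small _ _ _ hvN _ heps.
exists (K0 + B)%N => M N hM hN.
have -> : (fun i => \sum_(j < M + N + 1) fourier_comp d (j%:Z - M%:Z) a x i - d a x i) =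
   trunc Q (fun q i => - v q i) (fun q i => ~~ bin M N q i && (`|o q| <= B)%N).
  apply: funext => i; rewrite P E2 /trunc -sumrB.
  apply: (@eq_big_allS _ _ _ _ _ hB) => q hq; rewrite hq andbT.
  by case: (bin M N q i); rewrite ?subrr ?sub0r.
apply: hK0 => q i /andP[hb hq].
move: hb hq; rewrite /bin /o /=; move: (q.1.1) (q.2) => z w; clearbody B; clear -hM hN; lia.
Qed.
End All.

Theorem proposition3p9 (R : realType) (G : topologicalZmodType)
  (hG : hausdorff_space G) (cG : compact [set: G]) (infG : ~ finite_set [set: G])
  (x1 : G) (dense_x1 : closure (range (fun n : int => x1 *~ n)) = [set: G])
  (d : op R -> op R) (hd : is_derivation x1 d) :
  forall a : op R, calA x1 a ->
  forall x : nat -> R[i], finsupp x ->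
    (forall M N : nat,
       ell2 (fun i => \sum_(j < M + N + 1) fourier_comp d (j%:Z - M%:Z) a x i)) /\
    (forall eps : R, 0 < eps -> exists K : nat, forall M N : nat,
       (K <= M)%N -> (K <= N)%N ->
       l2norm (fun i => \sum_(j < M + N + 1) fourier_comp d (j%:Z - M%:Z) a x i
                        - d a x i) < eps).
Proof.
move=> a ha x hx; exact: (@main_res R G x1 d hd a ha x hx).
Qed.
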